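(* Let $n\ge2$ be an integer, $\lambda\in(2n-1,2n)$, and $w_m=\phi(|m|/\lambda)$ for $|m|\le 2n-1$. Put $\|\mathbf{w}^0\|_1=1+2\sum_{l=1}^{n-1}w_{2l}$ and $\|\mathbf{w}^1\|_1=2\sum_{l=0}^{n-1}w_{2l+1}$, and consider the sub-masks of $S_{1,\mathbf{w}^\lambda}$, \[ a^0_l=\frac{w_{2l}}{\|\mathbf{w}^0\|_1}\ (l=1-n,\ldots,n-1),\qquad a^1_l=\frac{w_{2l-1}}{\|\mathbf{w}^1\|_1}\ (l=1-n,\ldots,n), \] and the difference sub-masks \[ q^0_j=\sum_{l=1-n}^{j}(a^0_l-a^1_l),\qquad q^1_j=\sum_{l=j}^{n-1}(a^0_l-a^1_{l+1}),\qquad j=1-n,\ldots,n-1. \] If \[ \frac{\sum_{l=j_0}^{n-1}w_{2l+1}}{\sum_{l=j_0}^{n-1} w_{2l}} < \frac{\|\mathbf{w}^1\|_1}{\|\mathbf{w}^0\|_1}<\frac{\sum_{l=j_1}^{n-1}w_{2l+1}}{\sum_{l=j_1+1}^{n-1} w_{2l}} \quad\text{for all } j_0=1,\ldots,n-1,\ j_1=1,\ldots,n-2, \] then $q^0_j>0$ and $q^1_j>0$ for all $j=1-n,\ldots,n-1$.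
   Context: $\phi:[0,1]\to(0,1]$ is a non-increasing function with $\phi(0)=1$. The scheme $S_{1,\mathbf{w}^\lambda}$ (weighted local polynomial regression of degree 1) acts by $(S\mathbf{f})_{2j}=\sum_{l=1-n}^{n-1}a^0_l f_{j+l}$, $(S\mathbf{f})_{2j+1}=\sum_{l=1-n}^{n}a^1_l f_{j+l}$; the numbers $q^0_j,q^1_j$ are the even and odd sub-masks of its difference scheme (the scheme with symbol $q(z)$ satisfying $a(z)=(1+z)q(z)$). *)

(* Defs.v *)
From mathcomp Require Import all_boot all_order all_algebra.
Set Implicit Arguments. Unset Strict Implicit. Unset Printing Implicit Defensive.
Import Order.TTheory GRing.Theory Num.Theory.
Local Open Scope ring_scope.

(* Sum over the integer range a..b (inclusive); empty (= 0) when b < a. *)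
Definition isum (R : zmodType) (a b : int) (F : int -> R) : R :=
  \sum_(i <- [seq a + (k%:Z) | k <- iota 0 (absz (b + 1 - a)%R)] | (a <= b)%R) F i.

Section Masks.
Variables (R : realFieldType) (phi : R -> R) (lambda : R) (n : nat).

Definition wt (m : int) : R := phi ((absz m)%:R / lambda).

Definition w0norm : R := 1 + 2 * isum 1 (n%:Z - 1) (fun l => wt (2 * l)).
Definition w1norm : R := 2 * isum 0 (n%:Z - 1) (fun l => wt (2 * l + 1)).

Definition a0 (l : int) : R := wt (2 * l) / w0norm.
Definition a1 (l : int) : R := wt (2 * l - 1) / w1norm.

Definition q0 (j : int) : R := isum (1 - n%:Z) j (fun l => a0 l - a1 l).
Definition q1 (j : int) : R := isum j (n%:Z - 1) (fun l => a0 l - a1 (l + 1)).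
End Masks.

(* Main.v *)
Require Import Defs.
From mathcomp Require Import all_boot all_order all_algebra.
From mathcomp Require Import zify ring lra.
Import Order.TTheory GRing.Theory Num.Theory.
Local Open Scope ring_scope.

Section Isum.
Variable R : zmodType.
Implicit Types (F G : int -> R) (a b c : int).

Lemma isumE a (m : nat) F :
  isum a (a + m%:Z - 1) F = \sum_(0 <= k < m) F (a + k%:Z).
Proof.
rewrite /isum.
have -> : (a + m%:Z - 1 + 1 - a)%R = m%:Z by ring.
case: m => [|m]; first by rewrite /= big_nil big_geq.
have -> : (a <= a + m.+1%:Z - 1) by lia.
by rewrite big_map.
Qed.

Lemma isum_form a b : a <= b + 1 -> b = a + (absz (b+1-a)%R)%:Z - 1.
Proof. lia. Qed.

Lemma isum_nil a b F : b < a -> isum a b F = 0.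
Proof.
move=> h; rewrite /isum.
have -> : (a <= b) = false by lia.
by rewrite big_pred0_eq.
Qed.

Lemma isum1 a F : isum a a F = F a.
Proof.
by have := isumE a 1%N F; rewrite addrK big_nat1 addr0.
Qed.

Lemma isum_ext a b F G : (forall i, F i = G i) -> isum a b F = isum a b G.
Proof. by move=> h; rewrite /isum; apply: eq_bigr. Qed.

Lemma isumB a b F G : isum a b (fun i => F i - G i) = isum a b F - isum a b G.
Proof. by rewrite /isum sumrB. Qed.

Lemma isum_shift a b F : isum (a + 1) (b + 1) F = isum a b (fun i => F (i + 1)).
Proof.
rewrite /isum.
have -> : (b + 1 + 1 - (a + 1))%R = (b + 1 - a)%R by ring.
rewrite lerD2r !big_map; apply: eq_bigr => i _; congr F; ring.
Qed.

Lemma isum_split a b c F : a <= b + 1 -> b <= c ->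
  isum a c F = isum a b F + isum (b + 1) c F.
Proof.
move=> h1 h2.
have [m hm] : exists m : nat, b = a + m%:Z - 1 by exists (absz (b+1-a)%R); lia.
have [p hp] : exists p : nat, c = b + p%:Z by exists (absz (c-b)%R); lia.
subst c b.
have E1 := isumE a (m+p) F; have E2 := isumE (a + m%:Z) p F.
rewrite (_ : a + (m+p)%N%:Z - 1 = a + m%:Z - 1 + p%:Z) in E1; last by lia.
rewrite (_ : a + m%:Z + p%:Z - 1 = a + m%:Z - 1 + p%:Z) in E2; last by lia.
rewrite (_ : a + m%:Z - 1 + 1 = a + m%:Z); last by ring.
rewrite E1 E2 isumE (big_cat_nat (leq0n m) (leq_addr p m)) /=.
congr (_ + _).
rewrite (big_addn 0 (m+p) m) addKn.
apply: eq_bigr => i _; congr F; lia.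
Qed.

Lemma isum_rev a b F : isum a b F = isum (- b) (- a) (fun i => F (- i)).
Proof.
have [h|h] := lerP a (b + 1); last first.
  by rewrite !isum_nil //; lia.
have [m ->] : exists m : nat, b = a + m%:Z - 1 by exists (absz (b+1-a)%R); lia.
have -> : - a = - (a + m%:Z - 1) + m%:Z - 1 by ring.
rewrite !isumE big_nat_rev /=.
apply: eq_big_nat => i /andP [_ hi]; congr F; lia.
Qed.

End Isum.

Lemma isum_divr (R : fieldType) (a b : int) (F : int -> R) c :
  isum a b (fun i => F i / c) = isum a b F / c.
Proof. by rewrite /isum mulr_suml. Qed.

Lemma isum_gt0 (R : numDomainType) (a b : int) (F : int -> R) : a <= b ->
  (forall i, a <= i <= b -> 0 < F i) -> 0 < isum a b F.
Proof.
move=> hab hF.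
have [m hm] : exists m : nat, b = a + m.+1%:Z - 1.
  by exists (absz (b-a)%R); lia.
subst b; rewrite isumE big_nat_recl // addr0.
apply: ltr_wpDr; first by rewrite big_seq; apply: sumr_ge0 => i; rewrite mem_index_iota => hi; apply/ltW/hF; lia.
by apply: hF; lia.
Qed.

Theorem lemma4p3 (R : realFieldType) (phi : R -> R) (n : nat) (lambda : R) :
  (2 <= n)%N ->
  (2 * n%:R - 1 < lambda) -> (lambda < 2 * n%:R) ->
  phi 0 = 1 ->
  (forall x, 0 <= x <= 1 -> 0 < phi x <= 1) ->
  (forall x y, 0 <= x -> x <= y -> y <= 1 -> phi y <= phi x) ->
  (forall j0 : int, 1 <= j0 <= n%:Z - 1 ->
     isum j0 (n%:Z - 1) (fun l => wt phi lambda (2 * l + 1))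
       / isum j0 (n%:Z - 1) (fun l => wt phi lambda (2 * l))
     < w1norm phi lambda n / w0norm phi lambda n) ->
  (forall j1 : int, 1 <= j1 <= n%:Z - 2 ->
     w1norm phi lambda n / w0norm phi lambda n
     < isum j1 (n%:Z - 1) (fun l => wt phi lambda (2 * l + 1))
       / isum (j1 + 1) (n%:Z - 1) (fun l => wt phi lambda (2 * l))) ->
  forall j : int, 1 - n%:Z <= j <= n%:Z - 1 ->
    0 < q0 phi lambda n j /\ 0 < q1 phi lambda n j.
Proof.
move=> hn hl1 hl2 phi0 hpos hmono H0 H1.
have n2 : (2 : R) <= n%:R by rewrite (ler_nat R 2 n).
have lam0 : 0 < lambda by lra.
have Wpos : forall m : int, -(2 * n%:Z - 1) <= m <= 2 * n%:Z - 1 ->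
    0 < wt phi lambda m.
  move=> m hm; have hm' : (absz m <= 2 * n - 1)%N by lia.
  have hx : ((absz m)%:R : R) <= (2 * n - 1)%N%:R by rewrite ler_nat.
  rewrite natrB ?natrM in hx; last by lia.
  rewrite /wt; apply: (andP (hpos _ _)).1; apply/andP; split.
    by apply: divr_ge0 => //; apply: ltW.
  by rewrite ler_pdivrMr //; lra.
have Weq : forall m m', m = - m' -> wt phi lambda m = wt phi lambda m'.
  by move=> m m' ->; rewrite /wt abszN.
have W0 : wt phi lambda 0 = 1 by rewrite /wt mul0r phi0.
pose S0 c := isum c (n%:Z - 1) (fun l => wt phi lambda (2 * l)).
pose S1 c := isum c (n%:Z - 1) (fun l => wt phi lambda (2 * l + 1)).
have S0pos : forall c, 0 <= c <= n%:Z - 1 -> 0 < S0 c.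
  move=> c hc; apply: isum_gt0; first by lia.
  by move=> i hi; apply: Wpos; lia.
have S1pos : forall c, 0 <= c <= n%:Z - 1 -> 0 < S1 c.
  move=> c hc; apply: isum_gt0; first by lia.
  by move=> i hi; apply: Wpos; lia.
have N0E : w0norm phi lambda n = 1 + 2 * S0 1 by [].
have N1E : w1norm phi lambda n = 2 * S1 0 by [].
have N0pos : 0 < w0norm phi lambda n.
  by rewrite N0E; have := S0pos 1 ltac:(lia); lra.
have N1pos : 0 < w1norm phi lambda n.
  by rewrite N1E; have := S1pos 0 ltac:(lia); lra.
have hq0 : forall j, 1 - n%:Z <= j <= n%:Z - 1 -> 0 < q0 phi lambda n j.
  move=> j hj.
  have [jneg|jpos] := ltrP j 0.
    rewrite /q0 isum_rev opprB.
    rewrite (@isum_ext R _ _ _ (fun i => wt phi lambda (2 * i) / w0norm phi lambda n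
                   - wt phi lambda (2 * i + 1) / w1norm phi lambda n)); last first.
      move=> i; rewrite /a0 /a1 (Weq (2 * - i) (2 * i)) ?(Weq (2 * - i - 1) (2 * i + 1)) //;
       ring.
    rewrite isumB !isum_divr.
    have h := H0 (- j) ltac:(lia).
    have p0 := S0pos (- j) ltac:(lia).
    rewrite -/(S0 _) -/(S1 _) in h *.
    rewrite subr_gt0 ltr_pdivrMr // mulrAC ltr_pdivlMr //.
    rewrite ltr_pdivrMr // in h.
    rewrite mulrAC ltr_pdivlMr // in h. by rewrite [S0 _ * _]mulrC.
  have T0 : isum (1 - n%:Z) (n%:Z - 1) (a0 phi lambda n) = 1.
    rewrite /a0 isum_divr (@isum_split R (1 - n%:Z) (-1) (n%:Z - 1)); [|lia|lia].
    rewrite (_ : -1 + 1 = 0 :> int) //.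
    rewrite (@isum_split R 0 0 (n%:Z - 1)); [|lia|lia].
    rewrite isum1 add0r.
    rewrite isum_rev opprK opprB.
    rewrite (@isum_ext R _ _ _ (fun i => wt phi lambda (2 * i))); last first.
      by move=> i; apply: Weq; ring.
    rewrite mulr0 W0 -/(S0 1) N0E.
    rewrite (_ : S0 1 + (1 + S0 1) = 1 + 2 * S0 1); last by ring.
    by rewrite divff // -N0E; apply: lt0r_neq0.
  have T1 : isum (1 - n%:Z) n%:Z (a1 phi lambda n) = 1.
    rewrite /a1 isum_divr (@isum_split R (1 - n%:Z) 0 n%:Z); [|lia|lia].
    rewrite isum_rev oppr0 opprB.
    rewrite (@isum_ext R _ _ _ (fun i => wt phi lambda (2 * i + 1))); last first.
      by move=> i; apply: Weq; ring.
    have := @isum_shift R 0 (n%:Z - 1) (fun l => wt phi lambda (2 * l - 1)).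
    rewrite add0r subrK => ->.
    rewrite (@isum_ext R _ _ (fun i => wt phi lambda (2 * (i + 1) - 1)) (fun i => wt phi lambda (2 * i + 1))); last first.
      by move=> i; congr wt; ring.
    rewrite -/(S1 0) N1E.
    rewrite (_ : S1 0 + S1 0 = 2 * S1 0); last by ring.
    by rewrite divff // -N1E; apply: lt0r_neq0.
  have e0 := @isum_split R (1 - n%:Z) j (n%:Z - 1) (a0 phi lambda n) ltac:(lia) ltac:(lia).
  have e1 := @isum_split R (1 - n%:Z) j (n%:Z) (a1 phi lambda n) ltac:(lia) ltac:(lia).
  rewrite T0 in e0; rewrite T1 in e1.
  rewrite /q0 isumB.
  suff : 0 < isum (j + 1) n%:Z (a1 phi lambda n) - isum (j + 1) (n%:Z - 1) (a0 phi lambda n) by lra.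
  have := @isum_shift R j (n%:Z - 1) (a1 phi lambda n).
  rewrite subrK => ->.
  rewrite /a1 /a0 !isum_divr.
  rewrite (@isum_ext R _ _ (fun i => wt phi lambda (2 * (i + 1) - 1)) (fun i => wt phi lambda (2 * i + 1))); last first.
    by move=> i; congr wt; ring.
  rewrite -/(S1 j) -/(S0 (j + 1)).
  have [jn|jn] := eqVneq j (n%:Z - 1).
    rewrite /S0 isum_nil; last by rewrite jn; lia.
    rewrite mul0r subr0; apply: divr_gt0 => //; apply: S1pos; lia.
  have [jz|jz] := eqVneq j 0.
    subst j; rewrite add0r N0E N1E.
    have := S0pos 1 ltac:(lia); have := S1pos 0 ltac:(lia).
    set x := S0 1; set y := S1 0 => hy hx.
    rewrite subr_gt0 ltr_pdivrMr; last by lra.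
    rewrite mulrAC ltr_pdivlMr; last by lra.
    rewrite (_ : y * (1 + 2 * x) = x * (2 * y) + y); last by ring.
    by rewrite ltrDl.
  have h := H1 j ltac:(lia).
  have p0 := S0pos (j + 1) ltac:(lia).
  rewrite -/(S0 _) -/(S1 _) in h.
  rewrite subr_gt0 ltr_pdivrMr // mulrAC ltr_pdivlMr //.
  rewrite ltr_pdivrMr // in h.
  rewrite mulrAC ltr_pdivlMr // in h.
  by rewrite mulrC.
move=> j hj; split; first exact: hq0.
have -> : q1 phi lambda n j = q0 phi lambda n (- j).
  rewrite /q1 /q0 isum_rev opprB; apply: isum_ext => i.
  rewrite /a0 /a1 (Weq (2 * - i) (2 * i)) ?(Weq (2 * (- i + 1) - 1) (2 * i - 1)) //;
   ring.
by apply: hq0; lia.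
Qed.
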